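(* Let $G$ be a finite graph that admits a distinguishing edge coloring and has a non-identity automorphism. Then $$\theta'(G)=\max\{\,|\alpha|_e \;:\; \alpha\in\mathrm{Aut}(G)\setminus\{\mathrm{id}\}\,\}+1.$$
   Context: All graphs are finite and simple. An automorphism $\alpha$ of $G$ acts on edges by $\alpha(uv)=\alpha(u)\alpha(v)$. $|\alpha|_e$ denotes the number of cycles, including cycles of length 1 (fixed edges), in the cycle decomposition of the permutation that $\alpha$ induces on $E(G)$. An edge coloring with $k$ colors is a surjective map $c:E(G)\to\{1,\dots,k\}$. It is distinguishing if the only automorphism preserving all edge colors is the identity. $\theta'(G)$ is the least integer $k$ such that every edge coloring of $G$ using exactly $k$ colors is distinguishing. *)

(* Defs.v *)
From mathcomp Require Import all_boot all_fingroup.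
Set Implicit Arguments.
Unset Strict Implicit.
Unset Printing Implicit Defensive.

Section EdgeDist.
Variables (V : finType) (e : rel V).

Definition is_aut (a : {perm V}) : bool :=
  [forall x, forall y, e (a x) (a y) == e x y].

Definition edges : {set {set V}} :=
  [set A : {set V} | [exists x, exists y, e x y && (A == [set x; y])]].

Definition edge_map (a : {perm V}) (A : {set V}) : {set V} := a @: A.

(* |alpha|_e : number of cycles (orbits, incl. fixed edges) of the induced
   permutation on E(G) *)
Definition num_edge_cycles (a : {perm V}) : nat :=
  #|[set [set B in edges | fconnect (edge_map a) A B] | A in edges]|.

(* an edge coloring with exactly k colors (colors 'I_k, i.e. {0..k-1}):
   only its values on edges matter; surjective onto the colors *)
Definition edge_coloring (k : nat) (c : {set V} -> 'I_k) : Prop :=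
  forall i : 'I_k, exists2 A, A \in edges & c A = i.

Definition distinguishing (k : nat) (c : {set V} -> 'I_k) : Prop :=
  forall a : {perm V}, is_aut a ->
    (forall A, A \in edges -> c (edge_map a A) = c A) -> a = 1%g.

Definition all_colorings_dist (k : nat) : Prop :=
  forall c : {set V} -> 'I_k, edge_coloring c -> distinguishing c.

Definition is_theta' (t : nat) : Prop :=
  0 < t /\ all_colorings_dist t /\
  (forall k, 0 < k -> k < t -> ~ all_colorings_dist k).

End EdgeDist.

(* Main.v *)
Require Import Defs.
From mathcomp Require Import all_boot all_fingroup.

Section Aux.
Variables (V : finType) (e : rel V).

Lemma edge_map_inj (a : {perm V}) : injective (edge_map a).
Proof. exact: imset_inj (@perm_inj _ a). Qed.

Lemma edge_map_edges (a : {perm V}) A :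
  is_aut e a -> A \in edges e -> edge_map a A \in edges e.
Proof.
move=> /forallP Ha; rewrite !inE => /existsP [x /existsP [y /andP [exy /eqP ->]]].
apply/existsP; exists (a x); apply/existsP; exists (a y).
have /forallP /(_ y) /eqP -> := Ha x; rewrite exy /=.
by rewrite /edge_map imsetU1 imset_set1.
Qed.

Definition cls (a : {perm V}) (A : {set V}) :=
  [set B in edges e | fconnect (edge_map a) A B].

Lemma cls_map (a : {perm V}) A : cls a (edge_map a A) = cls a A.
Proof.
apply/setP => B; rewrite !inE; congr (_ && _).
by rewrite -(same_fconnect1 (@edge_map_inj a)).
Qed.

End Aux.
Arguments cls {V}.
Arguments cls_map {V}.
Arguments edge_map_edges {V e a A}.

Theorem mainTheorem2 (V : finType) (e : rel V) :
  symmetric e -> irreflexive e ->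
  (exists k (c : {set V} -> 'I_k), edge_coloring e c /\ distinguishing e c) ->
  (exists a : {perm V}, is_aut e a && (a != 1%g)) ->
  is_theta' e
    ((\max_(a : {perm V} | is_aut e a && (a != 1%g)) num_edge_cycles e a).+1).
Proof.
move=> _ _ _ [a0 Pa0].
set M := \max_(a | _) _.
split => //; split.
  move=> c Hc a Ha Hpres; apply/eqP; apply: contraT => Hne.
  have HM : num_edge_cycles e a <= M by apply: (leq_bigmax_cond (P := fun a => is_aut e a && (a != 1%g))); rewrite Ha.
  pose pk i := odflt set0 [pick A | (A \in edges e) && (c A == i)].
  have Hpk i : (pk i \in edges e) && (c (pk i) == i).
    rewrite /pk; case: pickP => [A //|H0]; have [A HA Hci] := Hc i.
    by move: (H0 A); rewrite HA Hci eqxx.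
  have Hit n X : X \in edges e -> (iter n (edge_map a) X \in edges e) /\ c (iter n (edge_map a) X) = c X.
    move=> HX; elim: n => [|n [IH1 IH2]] //=; split.
      exact: edge_map_edges.
    by rewrite Hpres.
  pose h i := cls e a (pk i).
  have hinj : injective h.
    move=> i j Hij.
    have : pk j \in h j by rewrite /h /cls inE; case/andP: (Hpk j) => -> _; exact: connect0.
    rewrite -Hij /h /cls inE => /andP [_ Hcon].
    have := iter_findex Hcon; set n := findex _ _ _ => Heq.
    case/andP: (Hpk i) => Hei /eqP Hci; case/andP: (Hpk j) => _ /eqP Hcj.
    have [_ ] := Hit n _ Hei; rewrite Heq Hcj Hci => ->; done.
  have : M.+1 <= num_edge_cycles e a.
    have Hcard : #|h @: 'I_M.+1| = M.+1 by rewrite card_imset // card_ord.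
    rewrite -{1}Hcard.
    rewrite /num_edge_cycles; apply: subset_leq_card; apply/subsetP => X /imsetP [i _ ->].
    apply: imset_f; by case/andP: (Hpk i).
  by move=> H; move: (leq_trans H HM); rewrite ltnn.
move=> [//|k'] _ Hk Hall.
pose P := fun a : {perm V} => is_aut e a && (a != 1%g).
pose F := num_edge_cycles e.
have HMa : M = F [arg max_(i > a0 | P i) F i] by exact: bigmax_eq_arg.
move: HMa; case: arg_maxnP => // a Pa _ HMa.
set PP := [set cls e a A | A in edges e].
have HPP : #|PP| = M by rewrite HMa.
pose c (X : {set V}) : 'I_k'.+1 := inord (minn (index (cls e a X) (enum PP)) k').
have Hc : edge_coloring e c.
  move=> i.
  have Hi : i < size (enum PP) by rewrite -cardE HPP; exact: leq_trans (ltn_ord i) Hk.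
  have : nth set0 (enum PP) i \in PP by rewrite -mem_enum mem_nth.
  case/imsetP => A0 HA0 HX; exists A0 => //.
  rewrite /c -HX index_uniq ?enum_uniq //.
  have -> : minn i k' = i by apply/minn_idPl; rewrite -ltnS.
  by apply: val_inj; rewrite /= inordK.
case/andP: Pa => Ha Hne.
have := Hall c Hc a Ha (fun A _ => congr1 (fun X => inord (minn (index X (enum PP)) k')) (cls_map e a A)).
by move=> H1; rewrite H1 eqxx in Hne.
Qed.
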